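(* Let $R$ be a unital commutative ring and $(\mathcal{E},\mathcal{L},\mathcal{B})$ a normal labelled space. Let $B$ be a $\mathbb{Z}$-graded ring and $\eta:L_R(\mathcal{E},\mathcal{L},\mathcal{B})\to B$ a graded ring homomorphism (i.e. $\eta(L_R(\mathcal{E},\mathcal{L},\mathcal{B})_n)\subseteq B_n$ for all $n$) such that $\eta(rp_A)\neq 0$ for every non-empty $A\in\mathcal{B}$ and every non-zero $r\in R$. Then $\eta$ is injective.
   Context: A graph $\mathcal{E}=(\mathcal{E}^0,\mathcal{E}^1,r,s)$ consists of a set of vertices $\mathcal{E}^0$, a set of edges $\mathcal{E}^1$ and maps $r,s:\mathcal{E}^1\to\mathcal{E}^0$. A finite path is a sequence $\lambda=\lambda_1\cdots\lambda_n$ of edges with $r(\lambda_i)=s(\lambda_{i+1})$, with $s(\lambda)=s(\lambda_1)$, $r(\lambda)=r(\lambda_n)$. A labelled graph $(\mathcal{E},\mathcal{L})$ is a graph with a surjective map $\mathcal{L}:\mathcal{E}^1\to\mathcal{A}$ onto a set $\mathcal{A}$ (the alphabet), extended to paths by $\mathcal{L}(\lambda)=\mathcal{L}(\lambda_1)\cdots\mathcal{L}(\lambda_n)$. $\mathcal{L}^*(\mathcal{E})$ denotes the set of words $\mathcal{L}(\lambda)$ for finite paths $\lambda$ of positive length, together with the empty word $\omega$; $|\alpha|$ is the length of a word. For $A\subseteq\mathcal{E}^0$ and $\alpha\in\mathcal{L}^*(\mathcal{E})$, $r(A,\alpha)=\{r(\lambda)\mid \mathcal{L}(\lambda)=\alpha,\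 s(\lambda)\in A\}$ if $\alpha\neq\omega$ and $r(A,\omega)=A$; $r(\alpha)=r(\mathcal{E}^0,\alpha)$; $\mathcal{L}(A\mathcal{E}^1)=\{a\in\mathcal{A}\mid r(A,a)\neq\emptyset\}$. A labelled space $(\mathcal{E},\mathcal{L},\mathcal{B})$ is a labelled graph with a family $\mathcal{B}$ of subsets of $\mathcal{E}^0$ closed under finite intersections and finite unions, containing $r(\alpha)$ for all non-empty $\alpha\in\mathcal{L}^*(\mathcal{E})$, and with $r(A,\alpha)\in\mathcal{B}$ for all $A\in\mathcal{B}$, $\alpha\in\mathcal{L}^*(\mathcal{E})$. It is normal if additionally $r(A\cap B,\alpha)=r(A,\alpha)\cap r(B,\alpha)$ for all $A,B\in\mathcal{B}$ and non-empty $\alpha$, and $\mathcal{B}$ is closed under relative complements. A non-empty $A\in\mathcal{B}$ is regular if $0<|\mathcal{L}(B\mathcal{E}^1)|<\infty$ for every non-empty $B\in\mathcal{B}$ with $B\subseteq A$; $\mathcal{B}_{reg}$ is the set of regular sets together with $\emptyset$. For $\alpha\in\mathcal{L}^*(\mathcal{E})$, $\mathcal{B}_\alpha=\{A\in\mathcal{B}\mid A\subseteq r(\alpha)\}$. The Leavitt labelled path algebra $L_R(\mathcal{E},\mathcal{L},\mathcal{B})$ (for a normal labelled space and a unital commutative ring $R$) is the universal $R$-algebra generated by $\{p_A\mid A\in\mathcal{B}\}\cup\{s_a,s_a^*\mid a\in\mathcal{A}\}$ subject to: (i) $p_{A\cap B}=p_Ap_B$, $p_{A\cup B}=p_A+p_B-p_{A\cap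 B}$, $p_\emptyset=0$; (ii) $p_As_a=s_ap_{r(A,a)}$ and $s_a^*p_A=p_{r(A,a)}s_a^*$; (iii) $s_a^*s_a=p_{r(a)}$ and $s_b^*s_a=0$ for $b\neq a$; (iv) $s_as_a^*s_a=s_a$, $s_a^*s_as_a^*=s_a^*$; (v) $p_A=\sum_{a\in\mathcal{L}(A\mathcal{E}^1)}s_ap_{r(A,a)}s_a^*$ for every $A\in\mathcal{B}_{reg}$. For $\alpha=a_1\cdots a_n$ put $s_\alpha=s_{a_1}\cdots s_{a_n}$, $s_\alpha^*=s_{a_n}^*\cdots s_{a_1}^*$, and by convention $s_\omega p_A s_\omega^*=p_A$, $s_\omega p_A s_\beta^*=p_As_\beta^*$, etc. $L_R(\mathcal{E},\mathcal{L},\mathcal{B})$ is $\mathbb{Z}$-graded with $L_R(\mathcal{E},\mathcal{L},\mathcal{B})_n=\operatorname{span}_R\{s_\alpha p_As_\beta^*\mid \alpha,\beta\in\mathcal{L}^*(\mathcal{E}),\ A\in\mathcal{B}_\alpha\cap\mathcal{B}_\beta,\ |\alpha|-|\beta|=n\}$. *)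

(* Defs.v *)
From Stdlib Require Import List.
From mathcomp Require Import all_boot all_order all_algebra.
From mathcomp Require Import boolp classical_sets cardinality.
Set Implicit Arguments. Unset Strict Implicit. Unset Printing Implicit Defensive.
Import GRing.Theory.
Local Open Scope classical_set_scope.
Local Open Scope ring_scope.

(* (Leavitt labelled path algebras need not be unital, and the target ring   *)
(*  B is an arbitrary ring, so we do not use MathComp's unital ringType.)    *)

Record nuring := NURing {
  nur_sort :> zmodType;
  nur_mul : nur_sort -> nur_sort -> nur_sort;
  nur_mulA : associative nur_mul;
  nur_mulDl : left_distributive nur_mul +%R;
  nur_mulDr : right_distributive nur_mul +%R }.

Record nualg (R : comPzRingType) := NUAlg {
  nua_sort :> lmodType R;
  nua_mul : nua_sort -> nua_sort -> nua_sort;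
  nua_mulA : associative nua_mul;
  nua_mulDl : left_distributive nua_mul +%R;
  nua_mulDr : right_distributive nua_mul +%R;
  nua_scalerAl : forall (r : R) (x y : nua_sort),
      nua_mul (r *: x) y = r *: nua_mul x y;
  nua_scalerAr : forall (r : R) (x y : nua_sort),
      nua_mul x (r *: y) = r *: nua_mul x y }.

Definition nualg_hom (R : comPzRingType) (A C : nualg R) (f : A -> C) : Prop :=
  [/\ forall x y, f (x + y) = f x + f y,
      forall (r : R) x, f (r *: x) = r *: f x &
      forall x y, f (nua_mul x y) = nua_mul (f x) (f y)].

Section LabelledGraph.
Variables (V Ed : Type) (Alph : eqType).
Variables (rg sc : Ed -> V) (lab : Ed -> Alph).

Fixpoint is_path (p : seq Ed) : Prop :=
  match p with
  | [::] => True
  | e :: q => match q with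
              | [::] => True
              | f :: _ => rg e = sc f /\ is_path q
              end
  end.

Definition Lstar (w : seq Alph) : Prop :=
  w = [::] \/ exists (e : Ed) (p : seq Ed), is_path (e :: p) /\ map lab (e :: p) = w.

Definition rset (A : set V) (w : seq Alph) : set V :=
  if w is [::] then A else
  [set v | exists (e : Ed) (p : seq Ed),
     [/\ is_path (e :: p), map lab (e :: p) = w, A (sc e) & rg (last e p) = v]].

Definition rword (w : seq Alph) : set V := rset setT w.

Definition labels_out (A : set V) : set Alph :=
  [set a | rset A [:: a] != set0].

Variable BB : set (set V).

Definition labelled_space : Prop :=
  [/\ set0 \in BB,
      (forall A B, A \in BB -> B \in BB -> (A `&` B) \in BB),
      (forall A B, A \in BB -> B \in BB -> (A `|` B) \in BB),
      (forall w, Lstar w -> w != [::] -> rword w \in BB) &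
      (forall A w, A \in BB -> Lstar w -> rset A w \in BB)].

Definition normal_labelled_space : Prop :=
  [/\ labelled_space,
      (forall A B w, A \in BB -> B \in BB -> w != [::] ->
          rset (A `&` B) w = rset A w `&` rset B w) &
      (forall A B, A \in BB -> B \in BB -> (A `\` B) \in BB)].

Definition regular (A : set V) : Prop :=
  [/\ A \in BB, A != set0 &
      forall B, B \in BB -> B != set0 -> B `<=` A ->
        labels_out B != set0 /\ finite_set (labels_out B)].

Variable R : comPzRingType.

Section Relations.
Variables (C : nualg R) (p : set V -> C) (s ss : Alph -> C).
Local Notation "x ** y" := (nua_mul x y) (at level 40, left associativity).

Definition LLP_relations : Prop :=
  [/\
      (forall A B, A \in BB -> B \in BB ->
         p (A `&` B) = p A ** p B /\ p (A `|` B) = p A + p B - p (A `&` B))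
      /\ p set0 = 0,
      (forall A a, A \in BB ->
         p A ** s a = s a ** p (rset A [:: a]) /\
         ss a ** p A = p (rset A [:: a]) ** ss a),
      (forall a, ss a ** s a = p (rword [:: a])) /\
      (forall a b, b != a -> ss b ** s a = 0),
      (forall a, (s a ** ss a) ** s a = s a /\ (ss a ** s a) ** ss a = ss a) &
      (* (v) : the (finite, order-independent) sum over L(A E^1) *)
      (forall A, (regular A \/ A = set0) ->
         forall l : seq Alph, uniq l -> (forall a, a \in l <-> labels_out A a) ->
           p A = \sum_(a <- l) (s a ** p (rset A [:: a])) ** ss a)].

Definition s_word (w : seq Alph) (x : C) : C := foldr (fun a y => s a ** y) x w.
(* x * s_beta^*  = x ** s_{b_n}^* ... s_{b_1}^*  (with x ** s_omega^* = x) *)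
Definition ss_word (x : C) (w : seq Alph) : C := foldr (fun b y => y ** ss b) x w.

Definition monomial (al : seq Alph) (A : set V) (be : seq Alph) : C :=
  ss_word (s_word al (p A)) be.

Definition homogeneous (n : int) (x : C) : Prop :=
  exists l : seq (R * (seq Alph * set V * seq Alph)),
    (forall c, In c l ->
       [/\ Lstar c.2.1.1 /\ Lstar c.2.2,
           c.2.1.2 \in BB,
           c.2.1.2 `<=` rword c.2.1.1,
           c.2.1.2 `<=` rword c.2.2 &
           (size c.2.1.1)%:Z - (size c.2.2)%:Z = n]) /\
    x = \sum_(c <- l) c.1 *: monomial c.2.1.1 c.2.1.2 c.2.2.
End Relations.

Definition is_LLPA (A : nualg R) (p : set V -> A) (s ss : Alph -> A) : Prop :=
  LLP_relations p s ss /\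
  forall (C : nualg R) (q : set V -> C) (t tt : Alph -> C),
    LLP_relations q t tt ->
    exists f : A -> C,
      [/\ nualg_hom f,
          (forall X, X \in BB -> f (p X) = q X),
          (forall a, f (s a) = t a),
          (forall a, f (ss a) = tt a) &
          (forall g : A -> C, nualg_hom g ->
             (forall X, X \in BB -> g (p X) = q X) ->
             (forall a, g (s a) = t a) ->
             (forall a, g (ss a) = tt a) ->
             forall x, g x = f x)].

End LabelledGraph.

Definition Zgraded (B : nuring) (Bn : int -> set B) : Prop :=
  [/\ (forall n, Bn n 0 /\ forall x y, Bn n x -> Bn n y -> Bn n (x - y)),
      (forall m n x y, Bn m x -> Bn n y -> Bn (m + n) (nur_mul x y)),
      (forall x, exists (l : seq int) (y : int -> B),
          uniq l /\ (forall n, n \in l -> Bn n (y n)) /\ x = \sum_(n <- l) y n) &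
      (forall (l : seq int) (y : int -> B), uniq l ->
          (forall n, n \in l -> Bn n (y n)) -> \sum_(n <- l) y n = 0 ->
          forall n, n \in l -> y n = 0)].

Definition ring_hom (R : comPzRingType) (A : nualg R) (B : nuring) (f : A -> B) :
  Prop :=
  (forall x y, f (x + y) = f x + f y) /\
  (forall x y, f (nua_mul x y) = nur_mul (f x) (f y)).

(* Main.v *)
From HB Require Import structures.
Require Import Defs.
From mathcomp Require Import all_boot all_order all_algebra.
From mathcomp Require Import boolp classical_sets cardinality.
From Stdlib Require List.
From mathcomp Require Import zify.
Set Implicit Arguments. Unset Strict Implicit. Unset Printing Implicit Defensive.
Import GRing.Theory.
Local Open Scope classical_set_scope.
Local Open Scope ring_scope.

Section NUAlgLemmas.
Variables (R : comPzRingType) (C : nualg R).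
Local Notation "x ** y" := (nua_mul x y) (at level 40, left associativity).

Lemma nmul0l (x : C) : 0 ** x = 0.
Proof.
have h : 0 ** x = 0 ** x + 0 ** x by rewrite -nua_mulDl addr0.
by apply: (addrI (0 ** x)); rewrite -h addr0.
Qed.

Lemma nmul0r (x : C) : x ** 0 = 0.
Proof.
have h : x ** 0 = x ** 0 + x ** 0 by rewrite -nua_mulDr addr0.
by apply: (addrI (x ** 0)); rewrite -h addr0.
Qed.

Lemma nmulNl (x y : C) : (- x) ** y = - (x ** y).
Proof. by apply/eqP; rewrite -addr_eq0 -nua_mulDl addNr nmul0l. Qed.
Lemma nmulNr (x y : C) : x ** (- y) = - (x ** y).
Proof. by apply/eqP; rewrite -addr_eq0 -nua_mulDr addNr nmul0r. Qed.
Lemma nmulBl (x y z : C) : (x - y) ** z = x ** z - y ** z.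
Proof. by rewrite nua_mulDl nmulNl. Qed.
Lemma nmulBr (x y z : C) : z ** (x - y) = z ** x - z ** y.
Proof. by rewrite nua_mulDr nmulNr. Qed.
Lemma nmul_suml (I : Type) (r : seq I) (P : pred I) (F : I -> C) (y : C) :
  (\sum_(i <- r | P i) F i) ** y = \sum_(i <- r | P i) (F i ** y).
Proof.
elim: r => [|i r IH]; first by rewrite !big_nil nmul0l.
by rewrite !big_cons; case: (P i) => //; rewrite nua_mulDl IH.
Qed.
Lemma nmul_sumr (I : Type) (r : seq I) (P : pred I) (F : I -> C) (y : C) :
  y ** (\sum_(i <- r | P i) F i) = \sum_(i <- r | P i) (y ** F i).
Proof.
elim: r => [|i r IH]; first by rewrite !big_nil nmul0r.
by rewrite !big_cons; case: (P i) => //; rewrite nua_mulDr IH.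
Qed.
End NUAlgLemmas.
Record closedS (R : comPzRingType) (A : nualg R) (S : A -> Prop) := ClosedS {
  cl0 : S 0;
  clD : forall x y, S x -> S y -> S (x + y);
  clN : forall x, S x -> S (- x);
  clZ : forall r x, S x -> S (r *: x);
  clM : forall x y, S x -> S y -> S (nua_mul x y) }.

Definition subA (R : comPzRingType) (A : nualg R) (S : A -> Prop) (H : closedS S) : Type :=
  {x : A | S x}.

HB.instance Definition _ R A S H := gen_eqMixin (@subA R A S H).
HB.instance Definition _ R A S H := gen_choiceMixin (@subA R A S H).

Section SubAlg.
Variables (R : comPzRingType) (A : nualg R) (S : A -> Prop) (H : closedS S).
Local Notation T := (subA H).

Lemma sval_inj (x y : T) : proj1_sig x = proj1_sig y -> x = y.
Proof.
case: x => x Hx; case: y => y Hy /= E; subst y; congr exist; exact: Prop_irrelevance.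
Qed.

Definition sub0 : T := exist _ 0 (cl0 H).
Definition subadd (x y : T) : T := exist _ (proj1_sig x + proj1_sig y) (clD H (proj2_sig x) (proj2_sig y)).
Definition subopp (x : T) : T := exist _ (- proj1_sig x) (clN H (proj2_sig x)).
Definition subscale (r : R) (x : T) : T := exist _ (r *: proj1_sig x) (clZ H r (proj2_sig x)).
Definition submul (x y : T) : T := exist _ (nua_mul (proj1_sig x) (proj1_sig y)) (clM H (proj2_sig x) (proj2_sig y)).

Lemma subaddA : associative subadd.
Proof. by move=> x y z; apply: sval_inj => /=; rewrite addrA. Qed.
Lemma subaddC : commutative subadd.
Proof. by move=> x y; apply: sval_inj => /=; rewrite addrC. Qed.
Lemma subadd0 : left_id sub0 subadd.
Proof. by move=> x; apply: sval_inj => /=; rewrite add0r. Qed.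
Lemma subaddN : left_inverse sub0 subopp subadd.
Proof. by move=> x; apply: sval_inj => /=; rewrite addNr. Qed.

HB.instance Definition _ := GRing.isZmodule.Build T subaddA subaddC subadd0 subaddN.

Lemma subscaleA a b (v : T) : subscale a (subscale b v) = subscale (a * b) v.
Proof. by apply: sval_inj => /=; rewrite scalerA. Qed.
Lemma subscale1 : left_id 1 subscale.
Proof. by move=> x; apply: sval_inj => /=; rewrite scale1r. Qed.
Lemma subscaleDr : right_distributive subscale +%R.
Proof. by move=> r x y; apply: sval_inj => /=; rewrite scalerDr. Qed.
Lemma subscaleDl (v : T) : {morph subscale^~ v : a b / a + b}.
Proof. by move=> a b; apply: sval_inj => /=; rewrite scalerDl. Qed.

HB.instance Definition _ := GRing.Zmodule_isLmodule.Build R T subscaleA subscale1 subscaleDr subscaleDl.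

Lemma submulA : associative submul.
Proof. by move=> x y z; apply: sval_inj => /=; rewrite nua_mulA. Qed.
Lemma submulDl : left_distributive submul +%R.
Proof. by move=> x y z; apply: sval_inj => /=; rewrite nua_mulDl. Qed.
Lemma submulDr : right_distributive submul +%R.
Proof. by move=> x y z; apply: sval_inj => /=; rewrite nua_mulDr. Qed.
Lemma subZl r (x y : T) : submul (r *: x) y = r *: submul x y.
Proof. by apply: sval_inj => /=; rewrite nua_scalerAl. Qed.
Lemma subZr r (x y : T) : submul x (r *: y) = r *: submul x y.
Proof. by apply: sval_inj => /=; rewrite nua_scalerAr. Qed.

Definition subalg : nualg R := @NUAlg R T submul submulA submulDl submulDr subZl subZr.

Lemma sval_add (x y : subalg) : proj1_sig (x + y) = proj1_sig x + proj1_sig y.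
Proof. by []. Qed.
Lemma sval_0 : proj1_sig (0 : subalg) = 0.
Proof. by []. Qed.
Lemma sval_opp (x : subalg) : proj1_sig (- x) = - proj1_sig x.
Proof. by []. Qed.
Lemma sval_scale r (x : subalg) : proj1_sig (r *: x) = r *: proj1_sig x.
Proof. by []. Qed.
Lemma sval_mul (x y : subalg) : proj1_sig (nua_mul x y) = nua_mul (proj1_sig x) (proj1_sig y).
Proof. by []. Qed.
End SubAlg.

Section Sets.
Variables (V Ed : Type) (Alph : eqType).
Variables (rg sc : Ed -> V) (lab : Ed -> Alph) (BB : set (set V)).
Hypothesis Hlab : forall a : Alph, exists e : Ed, lab e = a.
Hypothesis Hnorm : normal_labelled_space rg sc lab BB.

Local Notation rset := (rset rg sc lab).
Local Notation rword := (rword rg sc lab).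
Local Notation Lstar := (Lstar rg sc lab).

Lemma Lstar1 a : Lstar [:: a].
Proof. case: (Hlab a) => e He; right; exists e, [::]; by rewrite /= He. Qed.

Lemma rset_concat X a w : rset (rset X [:: a]) w = rset X (a :: w).
Proof.
case: w => [//|b w].
apply/seteqP; split => v /=.
- move=> [e [q [Hp Hl Hx Hv]]].
  case: Hx => e0 [q0 [Hp0 Hl0 Hx0 Hv0]].
  case: q0 Hl0 Hp0 Hv0 => [|? ?] //= [He0] _ Hv0.
  exists e0, (e :: q); split.
  + by split => //; rewrite Hv0.
  + by rewrite /= He0 Hl.
  + done.
  + done.
- move=> [e [q [Hp Hl Hx Hv]]].
  case: q Hl Hp Hv => [|f q] //= [He Hl1 Hl2] [Hef Hp] Hv.
  exists f, q; split => //.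
  + by rewrite /= Hl1 Hl2.
  + by exists e, [::]; split => //=; rewrite He.
Qed.

Lemma rset_mono X Y w : X `<=` Y -> rset X w `<=` rset Y w.
Proof.
case: w => [//|a w] HXY v /= [e [q [Hp Hl Hx Hv]]].
by exists e, q; split => //; apply: HXY.
Qed.

Lemma rset_rword X w : rset X w `<=` rword w.
Proof.
case: w => [|a w]; first by move=> v _.
by apply: rset_mono.
Qed.

Lemma rset0 w : rset set0 w = set0.
Proof.
case: w => [//|a w]; apply/seteqP; split => v //=.
by move=> [e [q [_ _ []]]].
Qed.

Lemma rsetU X Y w : rset (X `|` Y) w = rset X w `|` rset Y w.
Proof.
case: w => [//|a w]; apply/seteqP; split => v /=.
- move=> [e [q [Hp Hl [Hx|Hx] Hv]]]; [left|right]; by exists e, q.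
- by move=> [] [e [q [Hp Hl Hx Hv]]]; exists e, q; split => //; [left|right].
Qed.

Lemma Lstar_rword w v : rword w v -> Lstar w.
Proof.
case: w => [|a w]; first by left.
by move=> [e [q [Hp Hl _ _]]]; right; exists e, q.
Qed.

Lemma BB0 : set0 \in BB.
Proof. by case: Hnorm => HL _ _; case: HL => H _ _ _ _; apply: H. Qed.
Lemma BBI X Y : X \in BB -> Y \in BB -> X `&` Y \in BB.
Proof. by case: Hnorm => HL _ _; case: HL => _ H _ _ _; apply: H. Qed.
Lemma BBU X Y : X \in BB -> Y \in BB -> X `|` Y \in BB.
Proof. by case: Hnorm => HL _ _; case: HL => _ _ H _ _; apply: H. Qed.
Lemma BBD X Y : X \in BB -> Y \in BB -> X `\` Y \in BB.
Proof. by case: Hnorm => _ _ H; apply: H. Qed.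

Lemma BB_rset X w : X \in BB -> rset X w \in BB.
Proof.
move=> HX; case: (pselect (Lstar w)) => Hw.
- by case: Hnorm => HL _ _; case: HL => _ _ _ _ H; apply: H.
- case: w Hw => [|a w] Hw; first by [].
  suff -> : rset X (a :: w) = set0 by exact: BB0.
  apply/seteqP; split => v //= [e [q [Hp Hl _ _]]].
  by apply: Hw; right; exists e, q.
Qed.

Lemma BB_rword w : w != [::] -> rword w \in BB.
Proof.
move=> Hw; case: (pselect (Lstar w)) => HLw.
- by case: Hnorm => HL _ _; case: HL => _ _ _ H _; apply: H.
- suff -> : rword w = set0 by exact: BB0.
  apply/seteqP; split => v //= Hv; apply: HLw; exact: Lstar_rword Hv.
Qed.

Lemma rsetI_tmp X Y w : X \in BB -> Y \in BB ->
  rset (X `&` Y) w = rset X w `&` rset Y w.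
Proof.
case: w => [//|a w] HX HY.
by case: Hnorm => _ H _; apply: H.
Qed.
Definition rsetI := rsetI_tmp.
Arguments Defs.rset : simpl never.


Variable (R : comPzRingType) (A : nualg R) (p : set V -> A) (s ss : Alph -> A).
Hypothesis Hrel : LLP_relations rg sc lab BB p s ss.
Local Notation "x ** y" := (nua_mul x y) (at level 40, left associativity).
Local Notation rs X a := (rset X [:: a]).
Local Notation rw a := (rword [:: a]).
Local Notation swd := (s_word s).
Local Notation sswd := (ss_word ss).
Local Notation mono := (monomial p s ss).

Lemma BBrs X a : X \in BB -> rs X a \in BB.
Proof. exact: BB_rset. Qed.
Lemma BBrw a : rw a \in BB.
Proof. exact: BB_rword. Qed.

Lemma pI X Y : X \in BB -> Y \in BB -> p (X `&` Y) = p X ** p Y.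
Proof. by case: Hrel => [[H _]] _ _ _ _ HX HY; case: (H X Y HX HY). Qed.
Lemma pU X Y : X \in BB -> Y \in BB -> p (X `|` Y) = p X + p Y - p (X `&` Y).
Proof. by case: Hrel => [[H _]] _ _ _ _ HX HY; case: (H X Y HX HY). Qed.
Lemma p0 : p set0 = 0.
Proof. by case: Hrel => [[_ H]]. Qed.
Lemma pXs X a : X \in BB -> p X ** s a = s a ** p (rs X a).
Proof. by case: Hrel => _ H _ _ _ HX; case: (H X a HX). Qed.
Lemma ssp X a : X \in BB -> ss a ** p X = p (rs X a) ** ss a.
Proof. by case: Hrel => _ H _ _ _ HX; case: (H X a HX). Qed.
Lemma sss a : ss a ** s a = p (rw a).
Proof. by case: Hrel => _ _ [H _] _ _. Qed.
Lemma sssN a b : b != a -> ss b ** s a = 0.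
Proof. by case: Hrel => _ _ [_ H] _ _; apply: H. Qed.
Lemma s_p a : s a = s a ** p (rw a).
Proof. case: Hrel => _ _ _ H _; case: (H a) => H1 _. by rewrite -sss nua_mulA H1. Qed.
Lemma ss_p a : ss a = p (rw a) ** ss a.
Proof. case: Hrel => _ _ _ H _; case: (H a) => _ H1. by rewrite -sss H1. Qed.

Lemma pDisj X Y : X \in BB -> Y \in BB -> X `&` Y = set0 -> p (X `|` Y) = p X + p Y.
Proof. by move=> HX HY H0; rewrite pU // H0 p0 subr0. Qed.
Lemma pC X Y : X \in BB -> Y \in BB -> p X ** p Y = p Y ** p X.
Proof. by move=> HX HY; rewrite -!pI // setIC. Qed.
Lemma psubl X Y : X \in BB -> Y \in BB -> X `<=` Y -> p X ** p Y = p X.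
Proof. by move=> HX HY HXY; rewrite -pI // setIidl. Qed.
Lemma psubr X Y : X \in BB -> Y \in BB -> X `<=` Y -> p Y ** p X = p X.
Proof. by move=> HX HY HXY; rewrite pC // psubl. Qed.
Lemma pid X : X \in BB -> p X ** p X = p X.
Proof. by move=> HX; rewrite psubl. Qed.

Lemma swd_mulr w y z : swd w y ** z = swd w (y ** z).
Proof. by elim: w => [//|a w IH] /=; rewrite -nua_mulA IH. Qed.
Lemma sswd_mull w y z : z ** sswd y w = sswd (z ** y) w.
Proof. by elim: w => [//|a w IH] /=; rewrite nua_mulA IH. Qed.
Lemma sswd_mul_foldl w x y :
  sswd x w ** y = x ** foldl (fun z b => ss b ** z) y w.
Proof.
elim: w x y => [//|b w IH] x y /=.
by rewrite -nua_mulA -IH.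
Qed.
Lemma sswd_rcons w x a : sswd x (rcons w a) = sswd (x ** ss a) w.
Proof. by rewrite -cats1 /ss_word foldr_cat. Qed.
Lemma swd0 w : swd w 0 = 0.
Proof. by elim: w => [//|a w IH] /=; rewrite IH nmul0r. Qed.
Lemma sswd0 w : sswd 0 w = 0.
Proof. by elim: w => [//|a w IH] /=; rewrite IH nmul0l. Qed.
Lemma swdD w x y : swd w (x + y) = swd w x + swd w y.
Proof. by elim: w => [//|a w IH] /=; rewrite IH nua_mulDr. Qed.
Lemma sswdD w x y : sswd (x + y) w = sswd x w + sswd y w.
Proof. by elim: w => [//|a w IH] /=; rewrite IH nua_mulDl. Qed.
Lemma swdZ w r x : swd w (r *: x) = r *: swd w x.
Proof. by elim: w => [//|a w IH] /=; rewrite IH nua_scalerAr. Qed.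
Lemma sswdZ w r x : sswd (r *: x) w = r *: sswd x w.
Proof. by elim: w => [//|a w IH] /=; rewrite IH nua_scalerAl. Qed.

Lemma commL w X y : X \in BB -> p X ** swd w y = swd w (p (rset X w) ** y).
Proof.
elim: w X => [//|a w IH] X HX /=.
rewrite nua_mulA pXs // -nua_mulA IH ?BBrs //.
by rewrite rset_concat.
Qed.
Lemma commR w X y : X \in BB -> sswd y w ** p X = sswd (y ** p (rset X w)) w.
Proof.
elim: w X => [//|a w IH] X HX /=.
rewrite -nua_mulA ssp // nua_mulA IH ?BBrs //.
by rewrite rset_concat.
Qed.

Lemma mono0 w1 w2 : mono w1 set0 w2 = 0.
Proof. by rewrite /monomial p0 swd0 sswd0. Qed.

Definition term := (R * (seq Alph * set V * seq Alph))%type.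
Definition tval (c : term) : A := c.1 *: mono c.2.1.1 c.2.1.2 c.2.2.
Definition spanP (P : seq Alph -> seq Alph -> Prop) (x : A) : Prop :=
  exists l : seq term, (forall c, List.In c l -> c.2.1.2 \in BB /\ P c.2.1.1 c.2.2)
    /\ x = \sum_(c <- l) tval c.

Lemma span0 P : spanP P 0.
Proof. by exists [::]; split; [move=> c []|rewrite big_nil]. Qed.
Lemma spanD P x y : spanP P x -> spanP P y -> spanP P (x + y).
Proof.
move=> [l1 [H1 ->]] [l2 [H2 ->]]; exists (l1 ++ l2); split; last by rewrite big_cat.
by move=> c /List.in_app_iff [] ?; [apply: H1|apply: H2].
Qed.
Lemma spanZ P r x : spanP P x -> spanP P (r *: x).
Proof.
move=> [l [H ->]]; exists [seq (r * c.1, c.2) | c <- l]; split.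
- move=> c /List.in_map_iff [d [<- Hd]] /=; exact: H.
- rewrite big_map scaler_sumr; apply: eq_bigr => c _; by rewrite /tval scalerA.
Qed.
Lemma spanN P x : spanP P x -> spanP P (- x).
Proof. by move=> H; rewrite -scaleN1r; apply: spanZ. Qed.
Lemma spanB P x y : spanP P x -> spanP P y -> spanP P (x - y).
Proof. by move=> Hx Hy; apply: spanD => //; apply: spanN. Qed.
Lemma span_term P c : c.2.1.2 \in BB -> P c.2.1.1 c.2.2 -> spanP P (tval c).
Proof. by move=> H1 H2; exists [:: c]; split; [move=> d [<-|[]]|rewrite big_seq1]. Qed.
Lemma span_sum P (I : Type) (r : seq I) (F : I -> A) :
  (forall i, List.In i r -> spanP P (F i)) -> spanP P (\sum_(i <- r) F i).
Proof.
elim: r => [|i r IH] H; first by rewrite big_nil; apply: span0.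
rewrite big_cons; apply: spanD; first by apply: H; left.
by apply: IH => j Hj; apply: H; right.
Qed.
Lemma span_lin (P Q : seq Alph -> seq Alph -> Prop) (f : A -> A) x :
  (forall x y, f (x + y) = f x + f y) -> f 0 = 0 ->
  (forall c, c.2.1.2 \in BB -> P c.2.1.1 c.2.2 -> spanP Q (f (tval c))) ->
  spanP P x -> spanP Q (f x).
Proof.
move=> fD f0 Hf [l [Hl ->]].
rewrite (big_morph f fD f0); apply: span_sum => c Hc.
by case: (Hl c Hc) => H1 H2; apply: Hf.
Qed.

Definition fullspan := spanP (fun _ _ => True).

Lemma full_pmul X x : X \in BB -> fullspan x -> fullspan (p X ** x).
Proof.
move=> HX; apply: span_lin; [exact: nua_mulDr|exact: nmul0r|].
move=> [r [[w1 C] w2]] /= HC _.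
have -> : p X ** tval (r, (w1, C, w2)) = tval (r, (w1, rset X w1 `&` C, w2)).
  rewrite /tval /= nua_scalerAr /monomial sswd_mull commL // -pI //.
  exact: BB_rset.
apply: span_term => //=; apply: BBI => //; exact: BB_rset.
Qed.

Lemma full_smul a x : fullspan x -> fullspan (s a ** x).
Proof.
apply: span_lin; [exact: nua_mulDr|exact: nmul0r|].
move=> [r [[w1 C] w2]] /= HC _.
have -> : s a ** tval (r, (w1, C, w2)) = tval (r, (a :: w1, C, w2)).
  by rewrite /tval /= nua_scalerAr /monomial sswd_mull.
exact: span_term.
Qed.

Lemma full_ssmul a x : fullspan x -> fullspan (ss a ** x).
Proof.
apply: span_lin; [exact: nua_mulDr|exact: nmul0r|].
move=> [r [[w1 C] w2]] /= HC _.
case: w1 => [|b w1].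
- have -> : ss a ** tval (r, ([::], C, w2)) = tval (r, ([::], rs C a, rcons w2 a)).
    by rewrite /tval /= nua_scalerAr /monomial sswd_mull /= ssp // sswd_rcons.
  apply: span_term => //; exact: BBrs.
- rewrite /tval /= nua_scalerAr /monomial sswd_mull /= nua_mulA.
  have [Hab0|Hab] := eqVneq a b.
  + subst b; have HX : rset (rw a) w1 \in BB by apply: BB_rset; exact: BBrw.
    rewrite sss commL ?BBrw // -pI //.
    have -> : sswd (swd w1 (p (rset (rw a) w1 `&` C))) w2 =
      mono w1 (rset (rw a) w1 `&` C) w2 by [].
    rewrite -[_ *: mono _ _ _]/(tval (r, (w1, rset (rw a) w1 `&` C, w2))).
    apply: span_term => //; apply: BBI => //; apply: BB_rset; exact: BBrw.
  + rewrite (sssN Hab) nmul0l sswd0 scaler0; exact: span0.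
Qed.

Lemma full_foldl w x : fullspan x -> fullspan (foldl (fun z b => ss b ** z) x w).
Proof. by elim: w x => [//|b w IH] x Hx /=; apply: IH; apply: full_ssmul. Qed.
Lemma full_swd w x : fullspan x -> fullspan (swd w x).
Proof. by elim: w => [//|a w IH] Hx /=; apply: full_smul; apply: IH. Qed.

Lemma full_mul x y : fullspan x -> fullspan y -> fullspan (x ** y).
Proof.
move=> Hx Hy; move: Hx; apply: (@span_lin _ _ (fun z => z ** y)).
- by move=> ? ?; apply: nua_mulDl.
- exact: nmul0l.
move=> [r [[w1 C] w2]] /= HC _.
rewrite /tval /= nua_scalerAl; apply: spanZ.
rewrite /monomial sswd_mul_foldl swd_mulr; apply: full_swd; apply: full_pmul => //.
exact: full_foldl.
Qed.

Lemma full_p X : X \in BB -> fullspan (p X).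
Proof.
move=> HX; have: fullspan (tval (1, ([::], X, [::]))) by apply: span_term.
by rewrite /tval scale1r.
Qed.
Lemma full_s a : fullspan (s a).
Proof. rewrite s_p; apply: full_smul; apply: full_p; exact: BBrw. Qed.
Lemma full_ss a : fullspan (ss a).
Proof.
have: fullspan (tval (1, ([::], rw a, [:: a]))) by apply: span_term => //; exact: BBrw.
by rewrite /tval scale1r /monomial /= -ss_p.
Qed.

Lemma all_span (HL : is_LLPA rg sc lab BB p s ss) x : fullspan x.
Proof.
have HS : closedS fullspan.
  by apply: ClosedS; [exact: span0|exact: spanD|exact: spanN|move=> r y; exact: spanZ|exact: full_mul].
pose T := subalg HS.
pose q (X : set V) : T := match pselect (X \in BB) with
  | left HX => exist _ (p X) (full_p HX) | right _ => 0 end.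
pose t (a : Alph) : T := exist _ (s a) (full_s a).
pose tt (a : Alph) : T := exist _ (ss a) (full_ss a).
have val_q X : X \in BB -> proj1_sig (q X) = p X.
  by move=> HX; rewrite /q; case: (pselect _) => // HX'; case: (HX' HX).
have val_sum (l : seq Alph) (F : Alph -> T) :
    proj1_sig (\sum_(a <- l) F a) = \sum_(a <- l) proj1_sig (F a).
  by apply: (big_morph (fun y : T => proj1_sig y)) => //.
have Hrel' : LLP_relations rg sc lab BB q t tt.
  case: Hrel => [[H1 H1']] H2 [H3 H3'] H4 H5.
  split.
  - split; last by apply: sval_inj; rewrite val_q ?p0 //; exact: BB0.
    move=> X Y HX HY; split; apply: sval_inj.
    + by rewrite sval_mul !val_q //; [exact: pI | exact: BBI].
    + rewrite !sval_add sval_opp !val_q //; [exact: pU|exact: BBI|exact: BBU].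
  - move=> X a HX; split; apply: sval_inj; rewrite !sval_mul !val_q //.
    + exact: pXs.
    + exact: BBrs.
    + exact: ssp.
    + exact: BBrs.
  - split.
    + move=> a; apply: sval_inj; rewrite sval_mul val_q; [exact: sss|exact: BBrw].
    + move=> a b Hab; apply: sval_inj; rewrite sval_mul /=; exact: sssN.
  - move=> a; split; apply: sval_inj; rewrite !sval_mul /=; by case: (H4 a).
  - move=> X HX l Hl Hla; apply: sval_inj; rewrite val_sum.
    have HXB : X \in BB by case: HX => [[]|->] //; exact: BB0.
    rewrite val_q // (H5 X HX l Hl Hla); apply: eq_bigr => a _.
    by rewrite !sval_mul val_q //; exact: BBrs.
case: HL => _ HU.
case: (HU T q t tt Hrel') => f [[fD fZ fM] fp fs fss _].
case: (HU A p s ss Hrel) => f0 [_ _ _ _ Huniq].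
have E1 := Huniq id.
have E2 := Huniq (fun y => proj1_sig (f y)).
have -> : x = proj1_sig (f x).
  transitivity (f0 x); first by apply: E1 => //; rewrite /nualg_hom; split.
  symmetry; apply: E2.
  - by rewrite /nualg_hom; split => [y z|r y|y z]; rewrite ?fD ?fZ ?fM ?sval_add ?sval_scale ?sval_mul.
  - by move=> X HX; rewrite fp // val_q.
  - by move=> a; rewrite fs.
  - by move=> a; rewrite fss.
by case: (f x).
Qed.

Lemma big_In (I : Type) (l : seq I) (f g : I -> A) :
  (forall c, List.In c l -> f c = g c) -> \sum_(c <- l) f c = \sum_(c <- l) g c.
Proof.
elim: l => [|c l IH] H; first by rewrite !big_nil.
by rewrite !big_cons H; [rewrite IH // => d Hd; apply: H; right|left].
Qed.

Variables (B : nuring) (eta : A -> B).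
Hypothesis Hhom : ring_hom eta.
Hypothesis Hnz : forall (X : set V) (r : R), X \in BB -> X != set0 -> r != 0 ->
      eta (r *: p X) != 0.

Lemma nur0l (x : B) : nur_mul 0 x = 0.
Proof.
have h : nur_mul 0 x = nur_mul 0 x + nur_mul 0 x by rewrite -nur_mulDl addr0.
by apply: (addrI (nur_mul 0 x)); rewrite -h addr0.
Qed.
Lemma nur0r (x : B) : nur_mul x 0 = 0.
Proof.
have h : nur_mul x 0 = nur_mul x 0 + nur_mul x 0 by rewrite -nur_mulDr addr0.
by apply: (addrI (nur_mul x 0)); rewrite -h addr0.
Qed.
Lemma etaD x y : eta (x + y) = eta x + eta y.
Proof. by case: Hhom. Qed.
Lemma etaM x y : eta (x ** y) = nur_mul (eta x) (eta y).
Proof. by case: Hhom. Qed.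
Lemma eta0 : eta 0 = 0.
Proof.
have h : eta 0 = eta 0 + eta 0 by rewrite -etaD addr0.
by apply: (addrI (eta 0)); rewrite -h addr0.
Qed.
Lemma etaN x : eta (- x) = - eta x.
Proof. by apply/eqP; rewrite -addr_eq0 -etaD addNr eta0. Qed.
Lemma etaB x y : eta (x - y) = eta x - eta y.
Proof. by rewrite etaD etaN. Qed.
Lemma eta_sum (I : Type) (l : seq I) (P : pred I) (f : I -> A) :
  eta (\sum_(i <- l | P i) f i) = \sum_(i <- l | P i) eta (f i).
Proof. exact: (big_morph eta etaD eta0). Qed.
Lemma kerL x y : eta x = 0 -> eta (y ** x) = 0.
Proof. by move=> H; rewrite etaM H nur0r. Qed.
Lemma kerR x y : eta x = 0 -> eta (x ** y) = 0.
Proof. by move=> H; rewrite etaM H nur0l. Qed.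

Lemma sum_pick (I : eqType) (F : seq I) (f : I -> A) (a : I) :
  uniq F -> a \in F -> (forall b, b != a -> f b = 0) -> \sum_(b <- F) f b = f a.
Proof. by move=> HF Ha Hf; rewrite (bigD1_seq a) //= big1 ?addr0 // => b /Hf. Qed.

Lemma setIDdisj (X Y : set V) : (X `&` Y) `&` (X `\` Y) = set0.
Proof. by apply/seteqP; split => v //= [[_ H1] [_ H2]]. Qed.

Section Gap.
Variable F : seq Alph.
Hypothesis HF : uniq F.

Definition G (X : set V) : A := p X - \sum_(a <- F) s a ** p (rs X a) ** ss a.

Lemma G_s X a : X \in BB -> a \in F -> G X ** s a = 0.
Proof.
move=> HX Ha; rewrite /G nmulBl nmul_suml (@sum_pick _ _ _ a) //.
- have Hsub : rs X a `<=` rw a by apply: rset_rword.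
  rewrite -!nua_mulA sss psubl ?BBrw ?BBrs //.
  by rewrite pXs // subrr.
- by move=> b Hb; rewrite -nua_mulA (sssN Hb) nmul0r.
Qed.

Lemma ss_G X a : X \in BB -> a \in F -> ss a ** G X = 0.
Proof.
move=> HX Ha; rewrite /G nmulBr nmul_sumr (@sum_pick _ _ _ a) //.
- have Hsub : rs X a `<=` rw a by apply: rset_rword.
  rewrite !nua_mulA sss psubr ?BBrw ?BBrs //.
  by rewrite ssp // subrr.
- move=> b Hb /=; rewrite !nua_mulA (sssN (b := a) (a := b)) ?nmul0l //.
  by rewrite eq_sym.
Qed.

Lemma G_p X Y : X \in BB -> Y \in BB -> G X ** p Y = G (X `&` Y).
Proof.
move=> HX HY; rewrite /G nmulBl nmul_suml -pI //; congr (_ - _).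
apply: eq_bigr => a _.
by rewrite rsetI // pI ?BBrs // -!nua_mulA ssp // !nua_mulA.
Qed.

Lemma BB_G_I X Y : X \in BB -> Y \in BB -> X `&` Y \in BB.
Proof. exact: BBI. Qed.

Lemma G_G X Y : X \in BB -> Y \in BB -> G X ** G Y = G (X `&` Y).
Proof.
move=> HX HY; rewrite {2}/G nmulBr G_p // nmul_sumr big1_seq ?subr0 //.
by move=> a /= Ha; rewrite !nua_mulA G_s // !nmul0l.
Qed.

Lemma G0 : G set0 = 0.
Proof.
rewrite /G p0 big1 ?subr0 // => a _.
by rewrite rset0 p0 nmul0r nmul0l.
Qed.

Lemma G_split X Y : X \in BB -> Y \in BB -> G X = G (X `&` Y) + G (X `\` Y).
Proof.
move=> HX HY.
have HI := BBI HX HY; have HD := BBD HX HY.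
have EX : X = (X `&` Y) `|` (X `\` Y) by rewrite setUIDK.
rewrite /G {1}EX pDisj ?setIDdisj //.
rewrite (eq_bigr (fun a => s a ** p (rs (X `&` Y) a) ** ss a + s a ** p (rs (X `\` Y) a) ** ss a)).
  by rewrite big_split opprD addrACA.
move=> a _; rewrite -nua_mulDl -nua_mulDr.
have E1 : rs X a = rs (X `&` Y) a `|` rs (X `\` Y) a by rewrite -rsetU -EX.
have E2 : rs (X `&` Y) a `&` rs (X `\` Y) a = set0.
  by rewrite -rsetI // setIDdisj rset0.
by rewrite E1 (pDisj (BBrs a HI) (BBrs a HD) E2).
Qed.

Lemma G_atom D c : D \in BB -> eta (c *: G D) = 0 -> c *: G D = 0.
Proof.
move=> HD Heta.
have [->|Hc] := eqVneq c 0; first by rewrite scale0r.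
case: (pselect (D = set0)) => [->|HD0]; first by rewrite G0 scaler0.
case: (pselect (exists b, labels_out rg sc lab D b /\ b \notin F)) => [[b [Hb HbF]]|Hno].
  exfalso.
  have E : ss b ** (c *: G D) ** s b = c *: p (rs D b).
    rewrite nua_scalerAr nua_scalerAl; congr (_ *: _).
    rewrite /G nmulBr nmulBl nmul_sumr nmul_suml big1_seq.
      have Hsub : rs D b `<=` rw b by apply: rset_rword.
      by rewrite subr0 ssp // -nua_mulA sss psubl ?BBrw ?BBrs.
    move=> a /= Ha; rewrite !nua_mulA (sssN (a := a) (b := b)) ?nmul0l //.
    by apply/eqP => Eab; move: Ha HbF; rewrite Eab => ->.
  have : eta (c *: p (rs D b)) = 0 by rewrite -E; apply: kerR; apply: kerL.
  by apply/eqP; apply: Hnz => //; apply: BBrs.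
have HsubF : forall b, labels_out rg sc lab D b -> b \in F.
  move=> b Hb; apply: contrapT => HbF; apply: Hno; exists b; split => //.
  by apply/negP.
case: (pselect (regular rg sc lab BB D)) => Hreg.
  case: Hrel => _ _ _ _ H5.
  pose l := [seq a <- F | `[< labels_out rg sc lab D a >]].
  have Hl : uniq l by apply: filter_uniq.
  have Hla : forall a, a \in l <-> labels_out rg sc lab D a.
    move=> a; rewrite mem_filter; split.
    - by case/andP => /asboolP.
    - by move=> Ha; apply/andP; split; [apply/asboolP|apply: HsubF].
  rewrite /G (H5 D (or_introl Hreg) l Hl Hla) big_filter.
  rewrite [X in _ - X](bigID (fun a => `[< labels_out rg sc lab D a >])) /=.
  rewrite [X in _ - (_ + X)]big1 ?addr0 ?subrr ?scaler0 // => a Ha.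
  have Ha' : ~ labels_out rg sc lab D a by move=> H; move/negP: Ha; apply; apply/asboolP.
  have -> : rs D a = set0 by apply/eqP; apply: contrapT => H; apply: Ha'; apply/negP.
  by rewrite p0 nmul0r nmul0l.
exfalso.
have : ~ (forall B0, B0 \in BB -> B0 != set0 -> B0 `<=` D ->
        labels_out rg sc lab B0 != set0 /\ finite_set (labels_out rg sc lab B0)).
  by move=> H; apply: Hreg; split => //; apply/eqP.
move=> /existsNP [B0 /not_implyP [HB0 /not_implyP [HB00 /not_implyP [HB0D Hfin]]]].
have Hsub : labels_out rg sc lab B0 `<=` [set` F].
  move=> a Ha; apply: HsubF; move: Ha; rewrite /labels_out /=.
  apply: contra => /eqP H; apply/eqP; apply/seteqP; split => // v Hv.
  by rewrite -H; apply: (rset_mono (w := [:: a]) HB0D).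
have Hfin' : finite_set (labels_out rg sc lab B0).
  by apply: (sub_finite_set Hsub); apply: finite_seq.
have HL0 : forall a, rs B0 a = set0.
  move=> a; apply/eqP; apply: contrapT => Ha; apply: Hfin; split => //.
  apply/eqP => E; have : labels_out rg sc lab B0 a by apply/negP.
  by rewrite E.
have E : (c *: G D) ** p B0 = c *: p B0.
  rewrite nua_scalerAl G_p // setIidr //; congr (_ *: _).
  rewrite /G big1 ?subr0 // => a _; by rewrite HL0 p0 nmul0r nmul0l.
have : eta (c *: p B0) = 0 by rewrite -E; apply: kerR.
by apply/eqP; apply: Hnz.
Qed.

Definition gval (L : seq (R * set V)) : A := \sum_(c <- L) c.1 *: G c.2.

Lemma gval_mulG L X : (forall c, List.In c L -> c.2 \in BB) -> X \in BB ->
  gval L ** G X = gval [seq (c.1, c.2 `&` X) | c <- L].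
Proof.
move=> HL HX; rewrite /gval nmul_suml big_map; apply: big_In => c Hc.
by rewrite nua_scalerAl G_G // HL.
Qed.

Lemma gval_subG L X : (forall c, List.In c L -> c.2 \in BB) -> X \in BB ->
  gval L - gval L ** G X = gval [seq (c.1, c.2 `\` X) | c <- L].
Proof.
move=> HL HX; rewrite gval_mulG // /gval !big_map -sumrB; apply: big_In => c Hc.
by rewrite (G_split (HL c Hc) HX) scalerDr addrC addKr.
Qed.

Lemma gval_cons c L : gval (c :: L) = c.1 *: G c.2 + gval L.
Proof. by rewrite /gval big_cons. Qed.

Lemma Gsum_ker L : (forall c, List.In c L -> c.2 \in BB) ->
  eta (gval L) = 0 -> gval L = 0.
Proof.
move: {2}(size L) (leqnn (size L)) => n; elim: n L => [|n IH] L.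
  by case: L => //= _ _ _; rewrite /gval big_nil.
case: L => [|[r C] L'] Hs HL Heta; first by rewrite /gval big_nil.
have HC : C \in BB by apply: (HL (r, C)); left.
have HL' : forall c, List.In c L' -> c.2 \in BB by move=> c Hc; apply: HL; right.
have Hu : gval ((r, C) :: L') - gval ((r, C) :: L') ** G C = 0.
  have E : gval [seq (c.1, c.2 `\` C) | c <- (r, C) :: L'] = gval [seq (c.1, c.2 `\` C) | c <- L'].
    by rewrite /= gval_cons /= setDv G0 scaler0 add0r.
  rewrite gval_subG // E; apply: IH; first by rewrite size_map.
  - by move=> c /List.in_map_iff [d [<- Hd]] /=; apply: BBD => //; apply: HL'.
  - rewrite -E -gval_subG // etaB Heta.
    by apply/eqP; rewrite subr_eq0 eq_sym; apply/eqP; apply: kerR.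
suff Hw : gval ((r, C) :: L') ** G C = 0.
  by move/eqP: Hu; rewrite Hw subr0 => /eqP.
have Hweta : eta (gval ((r, C) :: L') ** G C) = 0 by apply: kerR.
rewrite gval_mulG // in Hweta *.
case: L' Hs HL HL' Hu Hweta Heta => [|[r1 C1] L''] Hs HL HL' Hu Hweta Heta.
  by move: Hweta; rewrite /= gval_cons /gval big_nil addr0 setIid; apply: G_atom.
set D1 := C1 `&` C.
have HC1 : C1 \in BB by apply: (HL' (r1, C1)); left.
have HD1 : D1 \in BB by apply: BBI.
pose Lm := [seq (c.1, c.2 `&` C) | c <- L''].
have HLm : forall c, List.In c Lm -> c.2 \in BB.
  by move=> c /List.in_map_iff [d [<- Hd]] /=; apply: BBI => //; apply: HL'; right.
have EW : [seq (c.1, c.2 `&` C) | c <- [:: (r, C), (r1, C1) & L'']] = [:: (r, C), (r1, D1) & Lm].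
  by rewrite /= setIid.
rewrite EW in Hweta *.
have HW : forall c, List.In c [:: (r, C), (r1, D1) & Lm] -> c.2 \in BB.
  by move=> c [<-|[<-|Hc]] //; apply: HLm.
have HDC : D1 `<=` C by move=> v [].
have E1 : gval [:: (r, C), (r1, D1) & Lm] ** G D1 = gval ((r + r1, D1) :: [seq (c.1, c.2 `&` D1) | c <- Lm]).
  rewrite gval_mulG //= !gval_cons /= setIidr // setIid scalerDl addrA //.
have E2 : gval [:: (r, C), (r1, D1) & Lm] - gval [:: (r, C), (r1, D1) & Lm] ** G D1
   = gval ((r, C `\` D1) :: [seq (c.1, c.2 `\` D1) | c <- Lm]).
  by rewrite gval_subG //= !gval_cons /= setDv G0 scaler0 add0r.
have Z1 : gval [:: (r, C), (r1, D1) & Lm] ** G D1 = 0.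
  rewrite E1; apply: IH.
  - by rewrite /= /Lm !size_map; move: Hs; rewrite /= ltnS.
  - move=> c [<-|/List.in_map_iff [d [<- Hd]]] //=; apply: BBI => //; exact: HLm.
  - by rewrite -E1; apply: kerR.
have Z2 : gval [:: (r, C), (r1, D1) & Lm] - gval [:: (r, C), (r1, D1) & Lm] ** G D1 = 0.
  rewrite E2; apply: IH.
  - by rewrite /= /Lm !size_map; move: Hs; rewrite /= ltnS.
  - move=> c [<-|/List.in_map_iff [d [<- Hd]]] /=; first by apply: BBD.
    by apply: BBD => //; exact: HLm.
  - by rewrite -E2 etaB Hweta; apply/eqP; rewrite subr_eq0 eq_sym; apply/eqP; apply: kerR.
by move/eqP: Z2; rewrite Z1 subr0 => /eqP.
Qed.

End Gap.


Lemma tval_pmulL r w1 C w2 X : X \in BB -> C \in BB ->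
  p X ** tval (r, (w1, C, w2)) = tval (r, (w1, rset X w1 `&` C, w2)).
Proof.
move=> HX HC.
rewrite /tval /= nua_scalerAr /monomial sswd_mull commL // -pI //; exact: BB_rset.
Qed.
Lemma tval_pmulR r w1 C w2 X : X \in BB -> C \in BB ->
  tval (r, (w1, C, w2)) ** p X = tval (r, (w1, C `&` rset X w2, w2)).
Proof.
move=> HX HC.
rewrite /tval /= nua_scalerAl /monomial commR // swd_mulr -pI //; exact: BB_rset.
Qed.
Lemma tval_cons r a w1 C b w2 :
  tval (r, (a :: w1, C, b :: w2)) = s a ** tval (r, (w1, C, w2)) ** ss b.
Proof.
by rewrite /tval /= nua_scalerAr nua_scalerAl /monomial /= sswd_mull.
Qed.
Lemma tval_nil r C : tval (r, ([::], C, [::])) = r *: p C.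
Proof. by []. Qed.

Lemma span_pmulL P X x : X \in BB -> spanP P x -> spanP P (p X ** x).
Proof.
move=> HX; apply: span_lin; [exact: nua_mulDr|exact: nmul0r|].
move=> [r [[w1 C] w2]] /= HC HP; rewrite tval_pmulL //.
apply: span_term => //=; apply: BBI => //; exact: BB_rset.
Qed.
Lemma span_pmulR P X x : X \in BB -> spanP P x -> spanP P (x ** p X).
Proof.
move=> HX; apply: (@span_lin _ _ (fun y => y ** p X)); [move=> ? ?; exact: nua_mulDl|exact: nmul0l|].
move=> [r [[w1 C] w2]] /= HC HP; rewrite tval_pmulR //.
apply: span_term => //=; apply: BBI => //; exact: BB_rset.
Qed.

Fixpoint heads (l : seq term) : seq Alph :=
  if l is c :: l' then take 1 c.2.1.1 ++ take 1 c.2.2 ++ heads l' else [::].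

Lemma heads1 l c a w : List.In c l -> c.2.1.1 = a :: w -> a \in heads l.
Proof.
elim: l => [//|d l IH] /= [Hd|Hc] Hw.
- by subst d; rewrite Hw /= inE eqxx.
- by rewrite !mem_cat (IH Hc Hw) ?orbT.
Qed.
Lemma heads2 l c a w : List.In c l -> c.2.2 = a :: w -> a \in heads l.
Proof.
elim: l => [//|d l IH] /= [Hd|Hc] Hw.
- by subst d; rewrite Hw !mem_cat /= inE eqxx orbT.
- by rewrite !mem_cat (IH Hc Hw) ?orbT.
Qed.

Lemma In_filter (T : Type) (P : pred T) (l : seq T) c :
  List.In c [seq x <- l | P x] -> List.In c l /\ P c.
Proof.
elim: l => [//|d l IH] /=; case HP: (P d) => /=.
- by move=> [<-|/IH [H1 H2]]; [split; [left|]|split; [right|]].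
- by move=> /IH [H1 H2]; split; [right|].
Qed.

Definition Plev (m : nat) (w1 w2 : seq Alph) : Prop := size w1 = size w2 /\ (size w1 <= m)%N.

Definition Phi (F : seq Alph) (y : A) : A :=
  \sum_(a <- F) \sum_(b <- F) s a ** (ss a ** y ** s b) ** ss b.

Lemma PhiD F x y : Phi F (x + y) = Phi F x + Phi F y.
Proof.
rewrite /Phi -big_split; apply: eq_bigr => a _; rewrite -big_split; apply: eq_bigr => b _.
by rewrite nua_mulDr nua_mulDl nua_mulDr nua_mulDl.
Qed.
Lemma Phi0 F : Phi F 0 = 0.
Proof.
rewrite /Phi big1 // => a _; rewrite big1 // => b _.
by rewrite nmul0r nmul0l nmul0r nmul0l.
Qed.

Lemma Phi_cons F a b Y : uniq F -> a \in F -> b \in F ->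
  Phi F (s a ** Y ** ss b) = s a ** Y ** ss b.
Proof.
move=> HF Ha Hb; rewrite /Phi (@sum_pick _ _ _ a) //.
- rewrite (@sum_pick _ _ _ b) //.
  + have E : ss a ** (s a ** Y ** ss b) ** s b = p (rw a) ** Y ** p (rw b).
      by rewrite !nua_mulA sss -!nua_mulA sss.
    by rewrite E !nua_mulA -s_p -!nua_mulA -ss_p.
  + move=> b' Hb' /=.
    rewrite [ss a ** (_ ** ss b)]nua_mulA -[_ ** ss b ** s b']nua_mulA.
    by rewrite (sssN (a := b') (b := b)) 1?eq_sym // !nmul0r nmul0l.
- move=> a' Ha' /=; rewrite big1 // => b' _.
  rewrite [ss a' ** (_ ** ss b)]nua_mulA [ss a' ** (s a ** Y)]nua_mulA.
  by rewrite (sssN Ha') !nmul0l nmul0r nmul0l.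
Qed.

Lemma Phi_p F r C : uniq F -> C \in BB -> Phi F (r *: p C) = r *: (p C - G F C).
Proof.
move=> HF HC.
have -> : p C - G F C = \sum_(a <- F) s a ** p (rs C a) ** ss a.
  by rewrite /G opprB addrC subrK.
rewrite /Phi scaler_sumr; apply: eq_big_seq => a Ha.
rewrite (@sum_pick _ _ _ a) //.
- rewrite nua_scalerAr nua_scalerAl nua_scalerAr nua_scalerAl; congr (_ *: _).
  have Hsub : rs C a `<=` rw a by apply: rset_rword.
  by rewrite ssp // -[p (rs C a) ** ss a ** s a]nua_mulA sss psubl ?BBrw ?BBrs.
- move=> b Hb /=; rewrite nua_scalerAr nua_scalerAl nua_scalerAr nua_scalerAl ssp // -[p (rs C a) ** ss a ** s b]nua_mulA.
  by rewrite (sssN (a := b) (b := a)) 1?eq_sym // nmul0r nmul0r nmul0l scaler0.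
Qed.


Definition foldU (l : seq term) : set V := foldr (fun c U => c.2.1.2 `|` U) set0 l.
Lemma foldU_BB l : (forall c, List.In c l -> c.2.1.2 \in BB) -> foldU l \in BB.
Proof.
elim: l => [|c l IH] H; first by rewrite /foldU /=; exact: BB0.
rewrite /foldU /=; apply: BBU; first by apply: H; left.
by apply: IH => d Hd; apply: H; right.
Qed.
Lemma foldU_sub l c : List.In c l -> c.2.1.2 `<=` foldU l.
Proof.
elim: l => [//|d l IH] /= [<-|Hc]; first by move=> v Hv; left.
by move=> v Hv; right; apply: IH.
Qed.

Lemma deg0_base x : spanP (Plev 0) x -> eta x = 0 -> x = 0.
Proof.
move=> [l [Hl ->]] Heta.
have E : \sum_(c <- l) tval c = gval [::] [seq (c.1, c.2.1.2) | c <- l].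
  rewrite /gval big_map; apply: big_In => [[r [[w1 C] w2]]] Hc.
  case: (Hl _ Hc) => /= _ [Hs Hle].
  move: Hle; rewrite leqn0 size_eq0 => /eqP Hw1; subst w1.
  case: w2 Hs Hc => // _ Hc.
  by rewrite tval_nil /G big_nil subr0.
rewrite E; apply: (Gsum_ker (F := [::])) => //.
- by move=> c /List.in_map_iff [d [<- Hd]]; exact: (Hl d Hd).1.
- by rewrite -E.
Qed.

Lemma deg0_step m (IH : forall y, spanP (Plev m) y -> eta y = 0 -> y = 0) x :
  spanP (Plev m.+1) x -> eta x = 0 -> x = 0.
Proof.
move=> [l [Hl Hx]] Heta.
pose F := undup (heads l).
have HF : uniq F := undup_uniq _.
pose U := foldU l.
have HU : U \in BB by apply: foldU_BB => c Hc; exact: (Hl c Hc).1.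
have HCU : forall c, List.In c l -> c.2.1.2 `<=` U by move=> c; exact: foldU_sub.
have Hh1 : forall c a w, List.In c l -> c.2.1.1 = a :: w -> a \in F.
  by move=> c a w Hc Hw; rewrite mem_undup; apply: heads1 Hc Hw.
have Hh2 : forall c a w, List.In c l -> c.2.2 = a :: w -> a \in F.
  by move=> c a w Hc Hw; rewrite mem_undup; apply: heads2 Hc Hw.
pose L0 := [seq (c.1, c.2.1.2) | c <- l & nilp c.2.1.1].
have HL0 : forall c, List.In c L0 -> c.2 \in BB.
  move=> c /List.in_map_iff [d [<- Hd]]; case: (In_filter Hd) => Hd' _; exact: (Hl d Hd').1.
have E1 : G F U ** x ** G F U = gval F L0.
  rewrite Hx nmul_sumr nmul_suml /gval big_map big_filter [RHS]big_mkcond.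
  apply: big_In => [[r [[w1 C] w2]]] Hc /=.
  case: (Hl _ Hc) => /= HC [Hs _].
  case: w1 Hs Hc => [|a w1] Hs Hc.
  - case: w2 Hs Hc => // _ Hc.
    rewrite tval_nil nua_scalerAr nua_scalerAl G_p // (setIidr (HCU _ Hc)) G_G //.
    by rewrite (setIidl (HCU _ Hc)).
  - case: w2 Hs Hc => // b w2 Hs Hc.
    rewrite tval_cons !nua_mulA G_s ?nmul0l //.
    exact: (Hh1 _ a w1 Hc).
have E2 : gval F L0 = 0.
  by apply: Gsum_ker => //; rewrite -E1; apply: kerR; apply: kerL.
have E3 : Phi F x = x.
  suff : Phi F x = x - gval F L0 by rewrite E2 subr0.
  rewrite Hx (big_morph (Phi F) (PhiD F) (Phi0 F)) /gval big_map big_filter [X in _ - X]big_mkcond -sumrB.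
  apply: big_In => [[r [[w1 C] w2]]] Hc /=.
  case: (Hl _ Hc) => /= HC [Hs _].
  case: w1 Hs Hc => [|a w1] Hs Hc.
  - case: w2 Hs Hc => // _ Hc.
    by rewrite tval_nil Phi_p // scalerBr.
  - case: w2 Hs Hc => // b w2 Hs Hc.
    rewrite tval_cons Phi_cons ?subr0 //.
    + exact: (Hh1 _ a w1 Hc).
    + exact: (Hh2 _ b w2 Hc).
have E4 : forall a b, a \in F -> b \in F -> ss a ** x ** s b = 0.
  move=> a b Ha Hb; apply: IH; last by apply: kerR; apply: kerL.
  have Hx' : spanP (Plev m.+1) x by exists l.
  move: Hx'; apply: (@span_lin (Plev m.+1) (Plev m) (fun y => ss a ** y ** s b)).
  - by move=> y z; rewrite nua_mulDr nua_mulDl.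
  - by rewrite nmul0r nmul0l.
  move=> [r [[w1 C] w2]] /= HC [Hs Hle].
  case: w1 Hs Hle => [|a' w1] Hs Hle.
  - case: w2 Hs => // _.
    rewrite tval_nil nua_scalerAr nua_scalerAl ssp // -nua_mulA.
    have [Eab|Hab] := eqVneq a b.
    + subst b; rewrite sss -pI ?BBrw ?BBrs //.
      rewrite -tval_nil; apply: span_term => /=; first by apply: BBI; [apply: BBrs|apply: BBrw].
      by split.
    + by rewrite (sssN (a := b) (b := a)) // nmul0r scaler0; apply: span0.
  - case: w2 Hs => // b' w2 Hs.
    rewrite tval_cons.
    have [Eaa|Haa] := eqVneq a a'; last first.
      rewrite [ss a ** (_ ** ss b')]nua_mulA [ss a ** (s a' ** _)]nua_mulA.
      by rewrite (sssN (a := a') (b := a)) // !nmul0l; apply: span0.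
    subst a'.
    have [Ebb|Hbb] := eqVneq b b'; last first.
      rewrite [ss a ** (_ ** ss b')]nua_mulA -[_ ** ss b' ** s b]nua_mulA.
      have Hbb' : b' != b by rewrite eq_sym.
      by rewrite (sssN Hbb') !nmul0r; apply: span0.
    subst b'.
    have -> : ss a ** (s a ** tval (r, (w1, C, w2)) ** ss b) ** s b =
       p (rw a) ** tval (r, (w1, C, w2)) ** p (rw b).
      by rewrite !nua_mulA sss -!nua_mulA sss.
    apply: span_pmulR; first exact: BBrw.
    apply: span_pmulL; first exact: BBrw.
    apply: span_term => //; split; first by case: Hs.
    by move: Hle.
rewrite -E3 /Phi big1_seq // => a /= Ha; rewrite big1_seq // => b /= Hb.
by rewrite E4 // nmul0r nmul0l.
Qed.

Lemma deg0_all m x : spanP (Plev m) x -> eta x = 0 -> x = 0.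
Proof.
elim: m x => [|m IH] x; first exact: deg0_base.
by apply: deg0_step => y; apply: IH.
Qed.

Definition maxlen (l : seq term) : nat := foldr (fun c m => maxn (size c.2.1.1) m) 0%N l.
Lemma maxlen_ge l c : List.In c l -> (size c.2.1.1 <= maxlen l)%N.
Proof.
elim: l => [//|d l IH] /= [<-|Hc]; first by rewrite leq_maxl.
by rewrite (leq_trans (IH Hc)) // leq_maxr.
Qed.

Lemma deg0 x : spanP (fun w1 w2 => size w1 = size w2) x -> eta x = 0 -> x = 0.
Proof.
move=> [l [Hl Hx]]; apply: (deg0_all (m := maxlen l)).
exists l; split => // c Hc; case: (Hl c Hc) => H1 H2; split => //; split => //.
exact: maxlen_ge.
Qed.


Definition degP (n : int) (w1 w2 : seq Alph) : Prop := (size w1)%:Z - (size w2)%:Z = n.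

Lemma tvalL r a w1 C w2 : tval (r, (a :: w1, C, w2)) = s a ** tval (r, (w1, C, w2)).
Proof. by rewrite /tval /= nua_scalerAr /monomial sswd_mull. Qed.
Lemma tvalR r w1 C b w2 : tval (r, (w1, C, b :: w2)) = tval (r, (w1, C, w2)) ** ss b.
Proof. by rewrite /tval /= nua_scalerAl /monomial. Qed.

Lemma degpos k : forall x, spanP (degP (Posz k)) x -> eta x = 0 -> x = 0.
Proof.
elim: k => [|k IH] x.
  move=> [l [Hl Hx]]; apply: deg0; exists l; split => // c Hc.
  case: (Hl c Hc) => H1 H2; split => //; rewrite /degP /= in H2; lia.
move=> [l [Hl Hx]] Heta.
pose F := undup (heads l).
have HF : uniq F := undup_uniq _.
have Hh1 : forall c a w, List.In c l -> c.2.1.1 = a :: w -> a \in F.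
  by move=> c a w Hc Hw; rewrite mem_undup; apply: heads1 Hc Hw.
have E1 : x = \sum_(a <- F) s a ** (ss a ** x).
  rewrite [in LHS]Hx [in RHS]Hx.
  rewrite [RHS](eq_bigr (fun a => \sum_(c <- l) s a ** (ss a ** tval c))); last first.
    by move=> a _; rewrite !nmul_sumr.
  rewrite exchange_big /=; apply: big_In => [[r [[w1 C] w2]]] Hc /=.
  case: (Hl _ Hc) => /= HC Hdeg.
  case: w1 Hdeg Hc => [|a' w1] Hdeg Hc; first by rewrite /degP /= in Hdeg; lia.
  rewrite tvalL (@sum_pick _ _ _ a') //.
  - by rewrite [ss a' ** (s a' ** _)]nua_mulA sss [s a' ** (p _ ** _)]nua_mulA -s_p.
  - exact: (Hh1 _ a' w1 Hc).
  - move=> b Hb /=; rewrite [ss b ** _]nua_mulA (sssN (a := a') (b := b)) //.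
    by rewrite nmul0l nmul0r.
rewrite E1 big1_seq // => a /= Ha.
suff -> : ss a ** x = 0 by rewrite nmul0r.
apply: IH; last by apply: kerL.
have Hx' : spanP (degP (k.+1)%:Z) x by exists l.
move: Hx'; apply: (@span_lin (degP (k.+1)%:Z) (degP k%:Z) (fun y => ss a ** y)).
- by move=> y z; rewrite nua_mulDr.
- exact: nmul0r.
move=> [r [[w1 C] w2]] /= HC Hdeg.
case: w1 Hdeg => [|a' w1] Hdeg; first by rewrite /degP /= in Hdeg; lia.
rewrite tvalL nua_mulA.
have [Eaa|Haa] := eqVneq a a'.
- subst a'; rewrite sss; apply: span_pmulL; first exact: BBrw.
  apply: span_term => //; rewrite /degP /= in Hdeg *; lia.
- by rewrite (sssN (a := a') (b := a)) // nmul0l; apply: span0.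
Qed.

Lemma decompR l x : (forall c, List.In c l -> c.2.2 != [::]) ->
  x = \sum_(c <- l) tval c -> x = \sum_(b <- undup (heads l)) (x ** s b) ** ss b.
Proof.
move=> Hne Hx.
have HF : uniq (undup (heads l)) := undup_uniq _.
have Hh2 : forall c a w, List.In c l -> c.2.2 = a :: w -> a \in undup (heads l).
  by move=> c a w Hc Hw; rewrite mem_undup; apply: heads2 Hc Hw.
rewrite [in LHS]Hx [in RHS]Hx.
rewrite [RHS](eq_bigr (fun b => \sum_(c <- l) (tval c ** s b) ** ss b)); last first.
  by move=> b _; rewrite !nmul_suml.
rewrite exchange_big /=; apply: big_In => [[r [[w1 C] w2]]] Hc /=.
have := Hne _ Hc; case: w2 Hc => [//|b' w2] Hc _.
rewrite tvalR (@sum_pick _ _ _ b') //.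
- by rewrite -[_ ** ss b' ** s b']nua_mulA sss -[_ ** p _ ** ss b']nua_mulA -ss_p.
- exact: (Hh2 _ b' w2 Hc).
- move=> b Hb /=; rewrite -[_ ** ss b' ** s b]nua_mulA (sssN (a := b) (b := b')) 1?eq_sym //.
  by rewrite nmul0r nmul0l.
Qed.

Lemma degneg_step k (IH : forall y, spanP (degP (Negz k + 1)) y -> eta y = 0 -> y = 0) x :
  spanP (degP (Negz k)) x -> eta x = 0 -> x = 0.
Proof.
move=> [l [Hl Hx]] Heta.
have Hne : forall c, List.In c l -> c.2.2 != [::].
  move=> [r [[w1 C] w2]] Hc; case: (Hl _ Hc) => _ /=.
  by case: w2 Hc => // Hc; rewrite /degP /=; lia.
rewrite (decompR Hne Hx) big1_seq // => b /= Hb.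
suff -> : x ** s b = 0 by rewrite nmul0l.
apply: IH; last by apply: kerR.
have Hx' : spanP (degP (Negz k)) x by exists l.
move: Hx'; apply: (@span_lin (degP (Negz k)) (degP (Negz k + 1)) (fun y => y ** s b)).
- by move=> y z; rewrite nua_mulDl.
- exact: nmul0l.
move=> [r [[w1 C] w2]] /= HC Hdeg.
case: w2 Hdeg => [|b' w2] Hdeg; first by rewrite /degP /= in Hdeg; lia.
rewrite tvalR -nua_mulA.
have [Ebb|Hbb] := eqVneq b b'.
- subst b'; rewrite sss; apply: span_pmulR; first exact: BBrw.
  apply: span_term => //; rewrite /degP /= in Hdeg *; lia.
- by rewrite (sssN (a := b) (b := b')) 1?eq_sym // nmul0r; apply: span0.
Qed.

Lemma degneg k : forall x, spanP (degP (Negz k)) x -> eta x = 0 -> x = 0.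
Proof.
elim: k => [|k IH] x; apply: degneg_step => y Hy.
- by apply: (degpos (k := 0)); move: Hy; have -> : Negz 0 + 1 = 0%:Z by [].
- by apply: IH; move: Hy; have -> : Negz k.+1 + 1 = Negz k by lia.
Qed.

Lemma degn (n : int) x : spanP (degP n) x -> eta x = 0 -> x = 0.
Proof. case: n => k; [exact: degpos|exact: degneg]. Qed.


Definition nrm (w : seq Alph) (C : set V) : set V :=
  if w is [::] then C else C `&` rword w.

Lemma nrm_BB w C : C \in BB -> nrm w C \in BB.
Proof. by case: w => [//|a w] HC; apply: BBI => //; apply: BB_rword. Qed.
Lemma nrm_sub w C : nrm w C `<=` rword w.
Proof. by case: w => [|a w] v //= [_ ?]. Qed.
Lemma nrm_subC w C : nrm w C `<=` C.
Proof. by case: w => [|a w] v //= [? _]. Qed.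

Lemma swd_nrm w C : C \in BB -> swd w (p C) = swd w (p (nrm w C)).
Proof.
case: w => [//|a w] HC /=.
have HX : rset (rw a) w \in BB by apply: BB_rset; exact: BBrw.
rewrite [in LHS]s_p -nua_mulA commL ?BBrw // -pI //.
by rewrite {1}/rword rset_concat setIC.
Qed.
Lemma sswd_nrm b w y : sswd y (b :: w) = sswd (y ** p (rword (b :: w))) (b :: w).
Proof.
rewrite /= [in LHS]ss_p nua_mulA commR ?BBrw //.
by rewrite /rword rset_concat.
Qed.
Lemma mono_nrm w1 C w2 : C \in BB -> mono w1 C w2 = mono w1 (nrm w2 (nrm w1 C)) w2.
Proof.
move=> HC; rewrite /monomial swd_nrm //.
case: w2 => [//|b w2]; rewrite sswd_nrm swd_mulr -pI //; first exact: nrm_BB.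
exact: BB_rword.
Qed.

Lemma memIn (T : eqType) (l : seq T) c : c \in l -> List.In c l.
Proof.
elim: l => [//|d l IH]; rewrite inE => /orP [/eqP ->|/IH H]; [left|right] => //.
Qed.

Lemma main_inj (HLL : is_LLPA rg sc lab BB p s ss) (Bn : int -> set B) :
  Zgraded Bn ->
  (forall (n : int) (x : A), homogeneous rg sc lab BB p s ss n x -> Bn n (eta x)) ->
  injective eta.
Proof.
move=> Hgr Hhomog x y Exy.
have Hz : eta (x - y) = 0 by rewrite etaB Exy subrr.
apply/eqP; rewrite -subr_eq0; apply/eqP.
have [l [Hl Hz']] := all_span HLL (x - y).
move: (x - y) Hz Hz' => z Hz Hz'.
pose dg (c : term) : int := (size c.2.1.1)%:Z - (size c.2.2)%:Z.
pose L := undup (map dg l).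
pose zn (n : int) := \sum_(c <- l | dg c == n) tval c.
have Ez : z = \sum_(n <- L) zn n.
  rewrite Hz' /zn.
  rewrite [RHS](eq_bigr (fun n => \sum_(c <- l) if dg c == n then tval c else 0)); last first.
    by move=> n _; rewrite big_mkcond.
  rewrite exchange_big; apply: eq_big_seq => c Hc /=.
  rewrite (@sum_pick _ _ (fun n => if dg c == n then tval c else 0) (dg c)) ?eqxx //.
  - exact: undup_uniq.
  - by rewrite mem_undup; apply: map_f.
  - by move=> n Hn /=; rewrite eq_sym (negbTE Hn).
have Hspan : forall n, spanP (degP n) (zn n).
  move=> n; exists [seq c <- l | dg c == n]; split; last by rewrite big_filter.
  move=> c Hc0; case: (In_filter Hc0) => Hc /eqP Hdc; split; [exact: (Hl c Hc).1|exact: Hdc].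
pose S (c : term) := nrm c.2.2 (nrm c.2.1.1 c.2.1.2).
pose normc (c : term) : term := (c.1, (c.2.1.1, S c, c.2.2)).
have Hnormc : forall c, List.In c l -> tval c = tval (normc c).
  move=> [r [[w1 C] w2]] Hc; rewrite /tval /= mono_nrm //; exact: (Hl _ Hc).1.
have Hhom_n : forall n, homogeneous rg sc lab BB p s ss n (zn n).
  move=> n.
  exists [seq normc c | c <- l & (dg c == n) && (S c != set0)]; split.
  - move=> c' /List.in_map_iff [c [<- Hc0]].
    case: (In_filter Hc0) => Hc /andP [/eqP Hdc HS].
    have HC := (Hl c Hc).1.
    case/set0P: HS => v Hv.
    have H1 : S c `<=` rword c.2.1.1.
      by move=> u Hu; apply: nrm_sub; apply: nrm_subC Hu.
    have H2 : S c `<=` rword c.2.2 by apply: nrm_sub.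
    split => //=.
    + split; [exact: Lstar_rword (H1 v Hv)|exact: Lstar_rword (H2 v Hv)].
    + by apply: nrm_BB; apply: nrm_BB.
  - rewrite big_map big_filter /zn big_seq_cond.
    rewrite (eq_bigr (fun c => tval (normc c))); last first.
      by move=> c /andP [Hc _]; apply: Hnormc; apply: memIn.
    rewrite -big_seq_cond (bigID (fun c => S c != set0)) /= [X in _ + X]big1 ?addr0 //.
    move=> c /andP [_ HS]; move/negPn/eqP: HS => HS.
    by rewrite /tval /= HS mono0 scaler0.
case: Hgr => _ _ _ Hdir.
have Hs0 : \sum_(n <- L) eta (zn n) = 0 by rewrite -eta_sum -Ez.
have Hk := Hdir L (fun n => eta (zn n)) (undup_uniq _) (fun n _ => Hhomog n _ (Hhom_n n)) Hs0.
rewrite Ez big1_seq // => n /= Hn; apply: (degn (Hspan n)); exact: Hk.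
Qed.

End Sets.

Theorem corollary5p3
  (R : comPzRingType) (V Ed : Type) (Alph : eqType)
  (rg sc : Ed -> V) (lab : Ed -> Alph) (BB : set (set V))
  (A : nualg R) (p : set V -> A) (s ss : Alph -> A)
  (B : nuring) (Bn : int -> set B) (eta : A -> B) :
  (forall a : Alph, exists e : Ed, lab e = a) ->
  normal_labelled_space rg sc lab BB ->
  is_LLPA rg sc lab BB p s ss ->
  Zgraded Bn ->
  ring_hom eta ->
  (forall (n : int) (x : A), homogeneous rg sc lab BB p s ss n x -> Bn n (eta x)) ->
  (forall (X : set V) (r : R), X \in BB -> X != set0 -> r != 0 ->
      eta (r *: p X) != 0) ->
  injective eta.
Proof.
move=> Hlab Hnorm HLL Hgr Hhom Hhomog Hnz.
exact: (main_inj Hnorm HLL.1 Hhom Hnz HLL Hgr Hhomog).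
Qed.
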